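(* Let $p>155$ be a prime, let $G$ be a cyclic group of order $p$, let $g\in G\setminus\{0\}$, and let $S$ be an unsplittable minimal zero-sum sequence over $G$ of length $\frac{p-1}{2}$ which is one of $$g^{\frac{p-11}{2}}\Big(\tfrac{p+3}{2}g\Big)^4\Big(\tfrac{p-1}{2}g\Big)\quad\text{or}\quad g^{\frac{p-7}{2}}\Big(\tfrac{p+5}{2}g\Big)^2\Big(\tfrac{p-3}{2}g\Big).$$ Then $\operatorname{ind}(S)=2$.
   Context: A sequence over $G$ is a finite unordered list of elements of $G$ with repetition allowed, written multiplicatively; $h^r$ denotes $r$ copies of $h$ and $tg$ is the $t$-fold multiple of $g$. $S$ is a minimal zero-sum sequence if its sum is $0$ and no nonempty proper subsequence has sum $0$; it is unsplittable if there do not exist $h\in\operatorname{supp}(S)$ and $y,z\in G$ with $y+z=h$ such that replacing one copy of $h$ in $S$ by the two terms $y,z$ gives again a minimal zero-sum sequence. For $h\in G$ nonzero of order $n$ and $S=(x_1h)\cdots(x_lh)$ with integers $1\le x_i\le n$, the $h$-norm is $\|S\|_h=(x_1+\dots+x_l)/n$. If $\langle\operatorname{supp}(S)\rangle$ is a nontrivial finite cyclic group, $\operatorname{ind}(S)=\min\{\|S\|_h: h\in G,\ \langle\operatorname{supp}(S)\rangle=\langle h\rangle\}$. *)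

(* Defs.v *)
(* Sequences over an additive abelian group G (a zmodType)
   are represented by [seq G]; being "unordered" is handled by always
   quantifying over sub-multisets via masks and by stating the shape of S up
   to permutation ([perm_eq]). *)
From HB Require Import structures.
From mathcomp Require Import all_boot all_order all_algebra.
Set Implicit Arguments.
Unset Strict Implicit.
Unset Printing Implicit Defensive.
Import Order.TTheory GRing.Theory Num.Theory.
Local Open Scope ring_scope.

Section Defs.
Variable G : zmodType.

Definition seqsum (S : seq G) : G := \sum_(x <- S) x.

Definition min_zero_sum (S : seq G) : Prop :=
  seqsum S = 0 /\
  forall m : bitseq, let T := mask m S in
    T != [::] -> (size T < size S)%N -> seqsum T <> 0.

Definition unsplittable (S : seq G) : Prop :=
  ~ (exists h y z, h \in S /\ y + z = h /\
       min_zero_sum (y :: z :: rem h S)).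

Definition in_span (S : seq G) (x : G) : Prop :=
  exists c : seq int, x = \sum_(i < size S) S`_i *~ c`_i.

Definition generates (S : seq G) (h : G) : Prop :=
  forall x, in_span S x <-> exists k : int, x = h *~ k.

Definition order_of (h : G) (n : nat) : Prop :=
  (0 < n)%N /\ h *+ n = 0 /\ forall m, (0 < m < n)%N -> h *+ m <> 0.

Definition hnorm (h : G) (S : seq G) (q : rat) : Prop :=
  exists (n : nat) (xs : seq nat),
    order_of h n /\ size xs = size S /\
    (forall i, (i < size S)%N ->
        (1 <= nth 0%N xs i <= n)%N /\ S`_i = h *+ nth 0%N xs i) /\
    q = (sumn xs)%:R / n%:R.

Definition ind_is (S : seq G) (q : rat) : Prop :=
  (exists h, generates S h /\ hnorm h S q) /\
  (forall h q', generates S h -> hnorm h S q' -> q <= q').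

End Defs.

(* Main.v *)
Require Import Defs.
From HB Require Import structures.
From mathcomp Require Import all_boot all_order fingroup cyclic.
From mathcomp Require Import all_algebra.
From mathcomp Require Import zify.
Import Order.TTheory GRing.Theory Num.Theory.
Local Open Scope ring_scope.

Lemma ord_p (G : finZmodType) (p : nat) (x : G) (m : nat) :
  prime p -> #|G| = p -> x != 0 -> (x *+ m == 0) = (p %| m)%N.
Proof.
move=> pp cG x0.
have e : (x *+ m == 0) = (x ^+ m == 1)%g by [].
rewrite e -order_dvdn.
have : (#[x]%g %| p)%N.
  rewrite -cG -cardsT; apply: order_dvdG; exact: in_setT.
case/primeP: pp => _ H /H /orP [] /eqP Hx; last by rewrite Hx.
by move: Hx => /eqP; rewrite order_eq1 => /eqP x1; rewrite x1 eqxx in x0.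
Qed.

Lemma inj_mul (G : finZmodType) (p : nat) (x : G) (i j : nat) :
  prime p -> #|G| = p -> x != 0 -> (i < p)%N -> (j < p)%N -> x *+ i = x *+ j -> i = j.
Proof.
move=> pp cG x0.
wlog ij : i j / (i <= j)%N.
  move=> W; case: (leqP i j) => [ij|ji]; first exact: W.
  by move=> ip jp e; symmetry; apply: W => //; apply: ltnW.
move=> ip jp eij.
have : x *+ (j - i) == 0.
  have e2 : x *+ j = x *+ (j - i) + x *+ i by rewrite -mulrnDr subnK.
  by rewrite -eij in e2; rewrite -(addrK (x *+ i) (x *+ (j - i))) -e2 subrr.
rewrite (@ord_p G p x (j - i) pp cG x0).
case: (ltnP i j) => [lij|]; last lia.
move/dvdn_leq; rewrite subn_gt0 => /(_ lij); lia.
Qed.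

Lemma surj_mul (G : finZmodType) (p : nat) (x y : G) :
  prime p -> #|G| = p -> x != 0 -> exists j : nat, y = x *+ j.
Proof.
move=> pp cG x0.
pose f := fun i : 'I_p => x *+ i.
have fi : injective f.
  move=> i j; rewrite /f => eij; apply: val_inj.
  exact: (@inj_mul G p x i j pp cG x0 (ltn_ord i) (ltn_ord j) eij).
have := inj_card_onto fi; rewrite card_ord cG leqnn => /(_ isT y) /codomP [i ->].
by exists i.
Qed.

Lemma mask_bound (ys : seq nat) (m : bitseq) :
  all (fun y => 0 < y)%N ys ->
  (sumn (mask m ys) + size ys <= sumn ys + size (mask m ys))%N.
Proof.
elim: ys m => [|y ys IH] [|b m] //=.
- move=> /andP [y0 a]; rewrite addn0.
  have : (size ys <= sumn ys)%N.
    elim: ys a {IH} => //= z zs IHz /andP [z0 /IHz]; lia.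
  lia.
- move=> /andP [y0 /(IH m)]; case: b => /=; lia.
Qed.

Lemma size_le_sumn (ys : seq nat) : all (fun y => 0 < y)%N ys -> (size ys <= sumn ys)%N.
Proof. elim: ys => //= z zs IHz /andP [z0 /IHz]; lia. Qed.

Lemma seqsum_map (G : zmodType) (h : G) ys :
  seqsum (map (fun k => h *+ k) ys) = h *+ sumn ys.
Proof.
rewrite /seqsum; elim: ys => [|y ys IH] /=; first by rewrite big_nil.
by rewrite big_cons IH mulrnDr.
Qed.

Lemma min_map (G : zmodType) (h : G) n ys :
  order_of h n -> all (fun y => 0 < y)%N ys -> sumn ys = n ->
  min_zero_sum (map (fun k => h *+ k) ys).
Proof.
move=> [n0 [hn hm]] a sn; split; first by rewrite seqsum_map sn.
move=> m /=; rewrite -map_mask size_map seqsum_map => ne lt.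
apply: hm; apply/andP; split.
  have am : all (fun y => 0 < y)%N (mask m ys).
    by apply/allP => z /mem_mask zin; move/allP: a => /(_ z zin).
  have := @size_le_sumn (mask m ys) am; move: ne; rewrite -size_eq0 size_map; lia.
have := @mask_bound ys m a; rewrite size_map in lt; lia.
Qed.

Lemma rem_take_drop (T : eqType) (x : T) (s : seq T) :
  rem x s = take (index x s) s ++ drop (index x s).+1 s.
Proof.
elim: s => //= y s IH; case: eqP => [->|ne] /=.
  by rewrite drop0.
by rewrite IH.
Qed.

Lemma lower (G : finZmodType) (S : seq G) (h : G) (q : rat) (a b : G) :
  min_zero_sum S -> unsplittable S -> a \in S -> b \in S -> a != b ->
  hnorm h S q -> 2 <= q.
Proof.
move=> [S0 _] uns aS bS ab [n [xs [ho [sz [hx ->]]]]].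
have [n0 [hn hm]] := ho.
pose f := fun k : nat => h *+ k.
have Sm : S = map f xs.
  apply: (@eq_from_nth _ 0); first by rewrite size_map sz.
  by move=> i iS; rewrite (nth_map 0%N) ?sz //; exact: (hx i iS).2.
have apos : all (fun y => 0 < y)%N xs.
  apply/(all_nthP 0%N) => i; rewrite sz => /hx [/andP [] ] //.
have hs : h *+ sumn xs = 0 by rewrite -seqsum_map -/f -Sm.
have dv : sumn xs = ((sumn xs %/ n) * n)%N.
  have := divn_eq (sumn xs) n.
  case: (posnP (sumn xs %% n)%N) => [->|r0]; first by rewrite addn0.
  move=> e; exfalso; apply: (hm (sumn xs %% n)%N); first by rewrite r0 ltn_pmod.
  by rewrite -hs {2}e mulrnDr mulnC mulrnA hn mul0rn add0r.
have sp : (0 < sumn xs)%N.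
  have := @size_le_sumn xs apos; rewrite sz.
  have : (0 < size S)%N by case: (S) aS.
  move=> A B; exact: leq_trans A B.
set k := (sumn xs %/ n)%N in dv.
have k0 : (0 < k)%N by move: sp; rewrite dv; case: (k) => //.
rewrite dv natrM mulfK ?pnatr_eq0 -?lt0n // ler_nat.
case: (ltnP 1 k) => // k1.
have k1e : k = 1%N by apply/eqP; rewrite eqn_leq k1 k0.
have sn : sumn xs = n by rewrite dv k1e mul1n.
exfalso; apply: uns.
pose c := if a != h then a else b.
have cS : c \in S by rewrite /c; case: ifP.
have ch : c != h.
  rewrite /c; case: ifP => // /negbFE /eqP ah; by rewrite -ah eq_sym.
pose j := index c S.
have jS : (j < size S)%N by rewrite index_mem.
have Sj : S`_j = c by rewrite nth_index.
have [/andP [x1 xn] Sjx] := hx j jS.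
have x2 : (2 <= nth 0%N xs j)%N.
  case: (ltnP 1 (nth 0%N xs j)) => // x2; exfalso; move/eqP: ch; apply.
  rewrite -Sj Sjx.
  have -> : nth 0%N xs j = 1%N by lia.
  by [].
exists c, h, (h *+ (nth 0%N xs j - 1)); split => //; split.
  by rewrite -Sj Sjx -mulrS subn1 prednK // ltnW.
have -> : rem c S = map f (take j xs ++ drop j.+1 xs).
  by rewrite rem_take_drop -/j Sm map_cat map_take map_drop.
have -> : h :: h *+ (nth 0%N xs j - 1) :: map f (take j xs ++ drop j.+1 xs)
   = map f (1%N :: (nth 0%N xs j - 1)%N :: (take j xs ++ drop j.+1 xs)) by rewrite /= /f mulr1n.
apply: (@min_map _ h n _ ho).
  rewrite /= all_cat subn_gt0 x2 /=; apply/andP; split.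
    by apply/allP => y /mem_take yx; move/allP: apos => /(_ y yx).
  by apply/allP => y /mem_drop yx; move/allP: apos => /(_ y yx).
have sx : sumn xs = (sumn (take j xs) + nth 0%N xs j + sumn (drop j.+1 xs))%N.
  by rewrite -{1}(cat_take_drop j xs) sumn_cat (drop_nth 0%N) ?sz //= addnA.
rewrite /= sumn_cat; lia.
Qed.

Lemma nth_ind (k j : nat) (z : int) :
  (nseq k 0 ++ [:: z])`_j = if j == k then z else 0.
Proof.
rewrite nth_cat size_nseq nth_nseq; case: ltnP => jk.
  by rewrite (ltn_eqF jk).
case: eqP => [->|ne]; first by rewrite subnn.
have : (0 < j - k)%N by rewrite subn_gt0 ltn_neqAle jk andbT; apply/eqP => e; apply: ne.
by case: (j - k)%N => //= n _; rewrite nth_nil.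
Qed.

Lemma span_of (G : zmodType) (S : seq G) (y : G) (j : nat) :
  y \in S -> in_span S (y *+ j).
Proof.
move=> yS; exists (nseq (index y S) 0 ++ [:: j%:Z]).
have iS : (index y S < size S)%N by rewrite index_mem.
rewrite (bigD1 (Ordinal iS)) //= nth_ind eqxx nth_index // big1 ?addr0.
  by rewrite pmulrn.
move=> i /eqP ne; rewrite nth_ind; case: eqP => [e|_]; last by rewrite mulr0z.
by exfalso; apply: ne; apply: val_inj.
Qed.

Lemma upper (G : finZmodType) (p : nat) (h : G) (S : seq G) (a b u v : nat) :
  prime p -> #|G| = p -> h != 0 -> (0 < a)%N -> (2 < u)%N -> (u < v)%N -> (v < p)%N ->
  (2 * a + b * u + v = 2 * p)%N ->
  perm_eq S (nseq a (h *+ 2) ++ nseq b (h *+ u) ++ [:: h *+ v]) ->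
  generates S h /\ hnorm h S 2.
Proof.
move=> pp cG h0 a0 u2 uv vp sE pS.
have y0 : h *+ 2 != 0.
  rewrite (@ord_p G p h 2 pp cG h0); apply/negP => H2; have := @dvdn_leq p 2 isT H2; lia.
have yS : h *+ 2 \in S by rewrite (perm_mem pS) mem_cat mem_nseq eqxx a0.
have ne2u : h *+ u != h *+ 2.
  by apply/eqP => /(@inj_mul G p h u 2 pp cG h0); lia.
have ne2v : h *+ v != h *+ 2.
  by apply/eqP => /(@inj_mul G p h v 2 pp cG h0); lia.
have neuv : h *+ v != h *+ u.
  by apply/eqP => /(@inj_mul G p h v u pp cG h0); lia.
split.
  move=> x; split.
    move=> _; have [j ->] := @surj_mul G p h x pp cG h0.
    by exists (j%:Z); rewrite pmulrn.
  move=> _; have [j ->] := @surj_mul G p (h *+ 2) x pp cG y0.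
  exact: span_of.
pose c := fun y : G => if y == h *+ 2 then 2%N else if y == h *+ u then u else v.
exists p, (map c S); split.
  split; first exact: prime_gt0.
  split; first by apply/eqP; rewrite (@ord_p G p h p pp cG h0).
  move=> m /andP [m0 mp]; apply/eqP; rewrite (@ord_p G p h m pp cG h0).
  by apply/negP => H2; have := @dvdn_leq p m m0 H2; lia.
split; first by rewrite size_map.
split.
  move=> i iS; rewrite (nth_map 0) //.
  have : S`_i \in nseq a (h *+ 2) ++ nseq b (h *+ u) ++ [:: h *+ v].
    by rewrite -(perm_mem pS) mem_nth.
  rewrite !mem_cat !mem_nseq inE /c.
  case/or3P => [/andP [_ /eqP ->]|/andP [_ /eqP ->]|/eqP ->].
  - by rewrite eqxx; split => //; lia.
  - by rewrite (negbTE ne2u) eqxx; split => //; lia.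
  - by rewrite (negbTE ne2v) (negbTE neuv); split => //; lia.
have -> : sumn (map c S) = (2 * p)%N.
  rewrite (perm_sumn (perm_map c pS)) !map_cat !map_nseq /= /c eqxx.
  rewrite (negbTE ne2u) eqxx (negbTE ne2v) (negbTE neuv) !sumn_cat !sumn_nseq /=.
  lia.
by rewrite natrM mulfK // pnatr_eq0 -lt0n prime_gt0.
Qed.

Lemma final (G : finZmodType) (p : nat) (h : G) (S : seq G) (a b u v : nat) :
  prime p -> #|G| = p -> h != 0 -> (0 < a)%N -> (0 < b)%N -> (2 < u)%N -> (u < v)%N -> (v < p)%N ->
  (2 * a + b * u + v = 2 * p)%N ->
  min_zero_sum S -> unsplittable S ->
  perm_eq S (nseq a (h *+ 2) ++ nseq b (h *+ u) ++ [:: h *+ v]) ->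
  ind_is S 2.
Proof.
move=> pp cG h0 a0 b0 u2 uv vp sE ms uns pS.
have [gen hn] := @upper G p h S a b u v pp cG h0 a0 u2 uv vp sE pS.
split; first by exists h.
move=> h' q' _ hq.
have yS : h *+ 2 \in S by rewrite (perm_mem pS) mem_cat mem_nseq eqxx a0.
have uS : h *+ u \in S.
  by rewrite (perm_mem pS) !mem_cat; apply/orP; right; apply/orP; left; rewrite mem_nseq eqxx b0.
have ne : h *+ 2 != h *+ u.
  by apply/eqP => /(@inj_mul G p h 2 u pp cG h0); lia.
exact: (@lower G S h' q' _ _ ms uns yS uS ne hq).
Qed.

Lemma gmod (G : zmodType) (g : G) (p k m : nat) : g *+ p = 0 -> g *+ (p * k + m) = g *+ m.
Proof. by move=> gp; rewrite mulrnDr mulrnA gp mul0rn add0r. Qed.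

Theorem lemma3p6 (p : nat) (G : finZmodType) (g : G) (S : seq G) :
  prime p -> (155 < p)%N ->
  #|G| = p ->
  (exists h : G, forall x : G, exists k : nat, x = h *+ k) ->
  g != 0 ->
  min_zero_sum S -> unsplittable S ->
  size S = p.-1./2 ->
  (perm_eq S (nseq ((p - 11)./2) g ++ nseq 4 (g *+ (p + 3)./2)
               ++ [:: g *+ (p - 1)./2])
   \/ perm_eq S (nseq ((p - 7)./2) g ++ nseq 2 (g *+ (p + 5)./2)
               ++ [:: g *+ (p - 3)./2])) ->
  ind_is S 2.
Proof.
move=> pp p155 cG _ g0 ms uns _ cases.
have podd : odd p.
  by case: (even_prime pp) => // p2; rewrite p2 in p155.
set r := p./2.
have pE : p = (2 * r + 1)%N by rewrite -{1}(odd_double_half p) podd -/r; lia.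
have gp : g *+ p = 0 by apply/eqP; rewrite (@ord_p G p g p pp cG g0).
pose h := g *+ (r + 1).
have hE t : h *+ t = g *+ ((r + 1) * t) by rewrite /h mulrnA.
have hp : h *+ p = 0 by rewrite hE mulnC mulrnA gp mul0rn.
have gh : h *+ 2 = g.
  by rewrite hE (_ : ((r + 1) * 2 = p * 1 + 1)%N) ?gmod //; lia.
have h0 : h != 0 by apply: contra g0 => /eqP h0; rewrite -gh h0 mul0rn.
case: cases => pS.
- have e1 : ((p - 11)./2 = r - 5)%N by rewrite -divn2; lia.
  have e2 : ((p + 3)./2 = r + 2)%N by rewrite -divn2; lia.
  have e3 : ((p - 1)./2 = r)%N by rewrite -divn2; lia.
  have g3 : g *+ (r + 2) = h *+ 3.
    by rewrite hE (_ : ((r + 1) * 3 = p * 1 + (r + 2))%N) ?gmod //; lia.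
  have g4 : g *+ r = h *+ (p - 1).
    by rewrite hE (_ : ((r + 1) * (p - 1) = p * r + r)%N) ?gmod //; rewrite pE; nia.
  rewrite e1 e2 e3 g3 g4 -{1}gh in pS.
  apply: (@final G p h S _ _ _ _ pp cG h0 _ _ _ _ _ _ ms uns pS); lia.
- have e1 : ((p - 7)./2 = r - 3)%N by rewrite -divn2; lia.
  have e2 : ((p + 5)./2 = r + 3)%N by rewrite -divn2; lia.
  have e3 : ((p - 3)./2 = r - 1)%N by rewrite -divn2; lia.
  have g3 : g *+ (r + 3) = h *+ 5.
    by rewrite hE (_ : ((r + 1) * 5 = p * 2 + (r + 3))%N) ?gmod //; lia.
  have g4 : g *+ (r - 1) = h *+ (p - 3).
    by rewrite hE (_ : ((r + 1) * (p - 3) = p * (r - 1) + (r - 1))%N) ?gmod //; rewrite pE; nia.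
  rewrite e1 e2 e3 g3 g4 -{1}gh in pS.
  apply: (@final G p h S _ _ _ _ pp cG h0 _ _ _ _ _ _ ms uns pS); lia.
Qed.
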